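(* Let $a,b,c\in\mathbb{R}$ with $ac>0$ and $b^2-4ac>0$. Let $\{P_m(z)\}_{m\geq 0}$ be the sequence of functions of $z$ generated by \[ \sum_{m=0}^\infty P_m(z)\, t^m=\frac{1}{(at^2+bt+c)(1-tz)}. \] Then for every $m\geq 0$, no zero of $P_m(z)$ lies in the closed disk $\{z\in\mathbb{C}: |z|\leq 1/|\alpha|\}$, where $\alpha$ is the zero of $at^2+bt+c$ of smallest modulus.
   Context: A sequence $\{P_m(z)\}$ is generated by $f(t,z)$ if, for each $z\in\mathbb{C}$, $f(t,z)$ is analytic in $t$ in a neighborhood of $t=0$ and $P_m(z)$ is the coefficient of $t^m$ in the power series expansion of $f(t,z)$ in $t$ about $0$. *)

(* Defs.v *)
From Stdlib Require Import Reals.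
From Coquelicot Require Import Coquelicot.
Open Scope C_scope.

Definition genf (a b c : R) (t z : C) : C :=
  / ((RtoC a * t * t + RtoC b * t + RtoC c) * (1 - t * z)).

Definition generated_by (P : nat -> C -> C) (f : C -> C -> C) : Prop :=
  forall z : C, exists r : R, (0 < r)%R /\
    forall t : C, (Cmod t < r)%R ->
      @is_pseries C_AbsRing C_NormedModule (fun m => P m z) t (f t z).

(* Main.v *)
Require Import Defs.
From Stdlib Require Import Reals.
From Coquelicot Require Import Coquelicot.
From Stdlib Require Import Lra Psatz.
Open Scope R_scope.


Lemma fst_cont (l : C) : filterlim (fun w : C => Re w) (locally l) (locally (Re l)).
Proof. intros P [eps HP]. exists eps. intros y [H1 H2]. apply HP. exact H1. Qed.
Lemma snd_cont (l : C) : filterlim (fun w : C => Im w) (locally l) (locally (Im l)).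
Proof. intros P [eps HP]. exists eps. intros y [H1 H2]. apply HP. exact H2. Qed.

Lemma sum_n_Re (f : nat -> C) n : Re (sum_n f n) = sum_n (fun k => Re (f k)) n.
Proof. induction n. rewrite !sum_O. reflexivity. rewrite !sum_Sn. simpl. rewrite <- IHn. reflexivity. Qed.
Lemma sum_n_Im (f : nat -> C) n : Im (sum_n f n) = sum_n (fun k => Im (f k)) n.
Proof. induction n. rewrite !sum_O. reflexivity. rewrite !sum_Sn. simpl. rewrite <- IHn. reflexivity. Qed.

Lemma pow_n_RtoC (x : R) k : @pow_n C_Ring (RtoC x) k = RtoC (x ^ k).
Proof. induction k. reflexivity. simpl. rewrite IHk. change (RtoC x * RtoC (x^k) = RtoC (x * x^k))%C.
  unfold RtoC, Cmult; simpl; f_equal; ring. Qed.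

Lemma pow_n_R (x : R) k : @pow_n R_Ring x k = x ^ k.
Proof. induction k. reflexivity. simpl. rewrite IHk. reflexivity. Qed.

Lemma Hp (x : R) k (y : R) : scal (@pow_n R_AbsRing x k) y = x^k * y.
Proof. rewrite <- pow_n_R. reflexivity. Qed.

Lemma pseries_ReIm (e : nat -> C) (x : R) (l : C) :
  is_pseries e (RtoC x) l ->
  is_pseries (fun k => Re (e k)) x (Re l) /\ is_pseries (fun k => Im (e k)) x (Im l).
Proof.
  unfold is_pseries, is_series. intro H. split.
  - eapply filterlim_ext. 2: { eapply filterlim_comp. exact H. apply fst_cont. }
    intro n. cbv beta. rewrite sum_n_Re. apply sum_n_ext. intro k.
    change (Re (scal (pow_n (RtoC x) k) (e k)) = scal (pow_n x k) (Re (e k))).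
    rewrite pow_n_RtoC, (Hp x k). change (Re (RtoC (x^k) * e k)%C = x^k * Re (e k)).
    destruct (e k). unfold RtoC, Cmult; simpl; ring.
  - eapply filterlim_ext. 2: { eapply filterlim_comp. exact H. apply snd_cont. }
    intro n. cbv beta. rewrite sum_n_Im. apply sum_n_ext. intro k.
    change (Im (scal (pow_n (RtoC x) k) (e k)) = scal (pow_n x k) (Im (e k))).
    rewrite pow_n_RtoC, (Hp x k). change (Im (RtoC (x^k) * e k)%C = x^k * Im (e k)).
    destruct (e k). unfold RtoC, Cmult; simpl; ring.
Qed.

Lemma radius_pos (a : nat -> R) r : 0 < r -> (forall x, Rabs x < r -> ex_pseries a x) ->
  Rbar_lt 0 (CV_radius a).
Proof.
  intros Hr H.
  destruct (Rbar_lt_le_dec (CV_radius a) (r/2)) as [Hl|Hl].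
  - exfalso. apply (CV_disk_outside a (r/2)).
    + rewrite Rabs_pos_eq by lra. exact Hl.
    + destruct (H (r/2)) as [l Hl2]. rewrite Rabs_pos_eq; lra.
      apply is_lim_seq_ext with (fun k => scal (pow_n (r/2) k) (a k)).
      intro k. rewrite pow_n_pow. unfold scal; simpl. unfold mult; simpl. ring.
      apply ex_series_lim_0. exists l. exact Hl2.
  - eapply Rbar_lt_le_trans. 2: exact Hl. simpl. lra.
Qed.

Lemma uniqR (a1 a2 : nat -> R) (g : R -> R) r : 0 < r ->
  (forall x, Rabs x < r -> is_pseries a1 x (g x) /\ is_pseries a2 x (g x)) ->
  forall n, a1 n = a2 n.
Proof.
  intros Hr H n.
  assert (R1 : Rbar_lt 0 (CV_radius a1)).
  { apply (radius_pos a1 r Hr). intros x Hx. exists (g x). apply H; auto. }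
  assert (R2 : Rbar_lt 0 (CV_radius a2)).
  { apply (radius_pos a2 r Hr). intros x Hx. exists (g x). apply H; auto. }
  assert (E : Derive_n (PSeries a1) n 0 = Derive_n (PSeries a2) n 0).
  { apply Derive_n_ext_loc. exists (mkposreal r Hr). intros t Ht.
    change (Rabs (t - 0) < r) in Ht. rewrite Rminus_0_r in Ht.
    destruct (H t Ht) as [H1 H2]. rewrite (is_pseries_unique _ _ _ H1), (is_pseries_unique _ _ _ H2). reflexivity. }
  rewrite !Derive_n_coef in E by auto.
  apply Rmult_eq_reg_r with (INR (Factorial.fact n)). exact E. apply INR_fact_neq_0.
Qed.

Lemma uniqC (e1 e2 : nat -> C) (g : R -> C) r : 0 < r ->
  (forall x, Rabs x < r -> is_pseries e1 (RtoC x) (g x) /\ is_pseries e2 (RtoC x) (g x)) ->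
  forall n, e1 n = e2 n.
Proof.
  intros Hr H n.
  assert (HR : Re (e1 n) = Re (e2 n)).
  { apply (uniqR (fun k => Re (e1 k)) (fun k => Re (e2 k)) (fun x => Re (g x)) r Hr).
    intros x Hx. destruct (H x Hx) as [H1 H2]. split; apply pseries_ReIm; auto. }
  assert (HI : Im (e1 n) = Im (e2 n)).
  { apply (uniqR (fun k => Im (e1 k)) (fun k => Im (e2 k)) (fun x => Im (g x)) r Hr).
    intros x Hx. destruct (H x Hx) as [H1 H2]. split; apply pseries_ReIm; auto. }
  destruct (e1 n), (e2 n). simpl in *. subst. reflexivity.
Qed.

Fixpoint cp (w : C) (n : nat) : C := match n with O => RtoC 1 | S k => (w * cp w k)%C end.
Fixpoint Fd (d : nat -> R) (w : C) (n : nat) : C :=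
  match n with O => RtoC (d O) | S k => (Fd d w k + RtoC (d (S k)) * cp w (S k))%C end.

Lemma Fd_S d w n : Fd d w (S n) = (RtoC (d O) + w * Fd (fun j => d (S j)) w n)%C.
Proof.
  induction n.
  - simpl. unfold RtoC, Cmult, Cplus; simpl. f_equal; ring.
  - change (Fd d w (S (S n))) with (Fd d w (S n) + RtoC (d (S (S n))) * cp w (S (S n)))%C.
    rewrite IHn. simpl. destruct (Fd (fun j => d (S j)) w n) as [f1 f2].
    destruct (cp w n) as [c1 c2]. destruct w as [w1 w2].
    unfold RtoC, Cmult, Cplus; simpl. f_equal; ring.
Qed.

Lemma cp_mod w n : Cmod w <= 1 -> Cmod (cp w n) <= 1.
Proof.
  intro H. induction n. simpl. rewrite Cmod_1. lra.
  simpl. rewrite Cmod_mult. pose proof (Cmod_ge_0 w). pose proof (Cmod_ge_0 (cp w n)). nra.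
Qed.

Lemma Re_cp w n : Cmod w <= 1 -> Re (cp w n) <= 1.
Proof. intro H. pose proof (re_le_Cmod (cp w n)). pose proof (cp_mod w n H).
  pose proof (Rle_abs (Re (cp w n))). lra. Qed.

Lemma aux1 (w F W : C) (e : R) : Re ((1 - w) * (F + RtoC e * W))%C
       = Re ((1 - w) * F)%C + e * (Re W - Re (w * W)%C).
Proof. destruct w, W, F. unfold RtoC, Cmult, Cplus, Cminus, Copp; simpl. ring. Qed.

Lemma NV_inv d w n : Cmod w <= 1 -> (1 <= n)%nat ->
  (forall j, d (S j) <= d j) ->
  Re ((1 - w) * Fd d w n)%C >= (d 0%nat - d 1%nat) * (1 - Re w) + d n * (1 - Re (cp w (S n))).
Proof.
  intros Hw Hn Hd. induction n. lia.
  destruct n.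
  - simpl. destruct w as [x y]. unfold RtoC, Cmult, Cplus, Cminus, Copp; simpl. nra.
  - specialize (IHn ltac:(lia)).
    change (Fd d w (S (S n))) with (Fd d w (S n) + RtoC (d (S (S n))) * cp w (S (S n)))%C.
    change (cp w (S (S (S n)))) with (w * cp w (S (S n)))%C.
    set (W := cp w (S (S n))) in *.
    rewrite aux1.
    assert (1 - Re W >= 0) by (pose proof (Re_cp w (S (S n)) Hw); unfold W; lra).
    pose proof (Hd (S n)). nra.
Qed.

Lemma cp_one n : cp (RtoC 1) n = RtoC 1.
Proof. induction n. reflexivity. simpl. rewrite IHn. unfold RtoC, Cmult; simpl. f_equal; ring. Qed.

Lemma Fd_one d n : (forall j, 0 <= d j) -> Re (Fd d (RtoC 1) n) >= d 0%nat.
Proof. intro H. induction n. simpl. lra. simpl Fd. rewrite cp_one.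
  destruct (Fd d (RtoC 1) n) as [f1 f2]. simpl in *. pose proof (H (S n)). nra. Qed.

Lemma NV d w n : Cmod w <= 1 -> (forall j, 0 <= d j) -> (forall j, d (S j) <= d j) ->
  d 1%nat < d 0%nat -> Fd d w n <> RtoC 0.
Proof.
  intros Hw Hpos Hd H01 H0.
  destruct n.
  - simpl in H0. apply (f_equal Re) in H0. simpl in H0. pose proof (Hpos 1%nat). lra.
  - pose proof (NV_inv d w (S n) Hw (le_n_S 0 n (Nat.le_0_l n)) Hd) as I.
    rewrite H0 in I. replace (Re ((1 - w) * RtoC 0)%C) with 0 in I
      by (destruct w; unfold RtoC, Cmult, Cminus, Cplus, Copp; simpl; ring).
    pose proof (Re_cp w (S (S n)) Hw). pose proof (Hpos (S n)).
    assert (Hre : Re w >= 1) by nra.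
    pose proof (Cmod2_alt w). pose proof (re_le_Cmod w). pose proof (Rle_abs (Re w)).
    assert (Hw1 : w = RtoC 1).
    { assert (Re w = 1) by lra. assert (Im w ^ 2 <= 0).
      { pose proof (Cmod_ge_0 w). nra. }
      assert (Im w = 0) by nra. destruct w as [x y]; unfold RtoC; simpl in *; f_equal; lra. }
    subst w. pose proof (Fd_one d (S n) Hpos) as HF. rewrite H0 in HF. simpl in HF. pose proof (Hpos 1%nat). lra.
Qed.

Fixpoint Gs (rho : R) (n : nat) : R := match n with O => 1 | S k => Gs rho k + rho ^ (S k) end.

Lemma Gs_ge1 rho n : 0 < rho -> 1 <= Gs rho n.
Proof. intro H. induction n; simpl. lra. pose proof (pow_lt rho (S n) H). simpl in H0. lra. Qed.
Lemma Gs_lt rho n : 0 < rho -> Gs rho n < Gs rho (S n).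
Proof. intro H. simpl. pose proof (pow_lt rho (S n) H). simpl in H0. lra. Qed.
Lemma Gs_mono rho k l : 0 < rho -> (k <= l)%nat -> Gs rho k <= Gs rho l.
Proof. intros H Hkl. induction Hkl. lra. pose proof (Gs_lt rho m H). lra. Qed.

Lemma ceq (z1 z2 : C) : Re z1 = Re z2 -> Im z1 = Im z2 -> z1 = z2.
Proof. destruct z1, z2; simpl; intros; subst; reflexivity. Qed.

Definition sh (f : nat -> C) (n : nat) : C := match n with O => RtoC 0 | S k => f k end.

Lemma solve0 (c : R) (t : C) : c <> 0 -> (RtoC c * t = 1)%C -> t = RtoC (/ c).
Proof. intros Hc Q. destruct t as [t1 t2]. apply (f_equal Re) in Q as Qr. apply (f_equal Im) in Q as Qi.
  simpl in Qr, Qi. apply ceq; simpl.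
  - field_simplify_eq; auto. nra.
  - ring_simplify in Qi. destruct (Rmult_integral _ _ Qi); [contradiction|auto]. Qed.
Lemma solve1 (c b v : R) (t : C) : c <> 0 -> (RtoC c * t + RtoC b * RtoC v = 0)%C -> t = RtoC (-(b * v) / c).
Proof. intros Hc Q. destruct t as [t1 t2]. apply (f_equal Re) in Q as Qr. apply (f_equal Im) in Q as Qi.
  simpl in Qr, Qi. apply ceq; simpl.
  - field_simplify_eq; auto. nra.
  - ring_simplify in Qi. destruct (Rmult_integral _ _ Qi); [contradiction|auto]. Qed.
Lemma solve2 (c b a v1 v0 : R) (t : C) : c <> 0 ->
  (RtoC c * t + RtoC b * RtoC v1 + RtoC a * RtoC v0 = 0)%C -> t = RtoC (-(b * v1 + a * v0) / c).
Proof. intros Hc Q. destruct t as [t1 t2]. apply (f_equal Re) in Q as Qr. apply (f_equal Im) in Q as Qi.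
  simpl in Qr, Qi. apply ceq; simpl.
  - field_simplify_eq; auto. nra.
  - ring_simplify in Qi. destruct (Rmult_integral _ _ Qi); [contradiction|auto]. Qed.

Lemma rec_sol (a b c x0 : R) (s : nat -> C) :
  c <> 0 -> x0 <> 0 -> a * x0 * x0 + b * x0 + c = 0 ->
  (RtoC c * s O = 1)%C ->
  (RtoC c * s 1%nat + RtoC b * s O = 0)%C ->
  (forall n, RtoC c * s (S (S n)) + RtoC b * s (S n) + RtoC a * s n = 0)%C ->
  forall n, s n = RtoC ((/ x0) ^ n * Gs (a * x0 * x0 / c) n / c).
Proof.
  intros Hc Hx E Q0 Q1 Q2.
  assert (Hb : b = - (c + a * x0 * x0) / x0) by (field_simplify_eq; [nra | auto]).
  assert (H : forall n, s n = RtoC ((/ x0) ^ n * Gs (a * x0 * x0 / c) n / c)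
                 /\ s (S n) = RtoC ((/ x0) ^ (S n) * Gs (a * x0 * x0 / c) (S n) / c)).
  { induction n.
    - apply solve0 in Q0; auto. rewrite Q0 in Q1. apply solve1 in Q1; auto.
      rewrite Q0, Q1. split; f_equal; rewrite ?Hb; simpl; field; auto.
    - destruct IHn as [IH1 IH2]. split; auto.
      specialize (Q2 n). rewrite IH1, IH2 in Q2. apply solve2 in Q2; auto.
      rewrite Q2. f_equal. rewrite Hb. simpl. field. auto. }
  intro n; apply H.
Qed.

Lemma p_sol (x0 c : R) (z : C) (p s : nat -> C) (G : nat -> R) : x0 <> 0 -> c <> 0 ->
  (forall n, s n = p n - z * sh p n)%C -> (forall n, s n = RtoC ((/ x0) ^ n * G n / c)) ->
  forall n, p n = (RtoC (/ c * (/ x0) ^ n) * Fd (fun j => G (n - j)%nat) (z * RtoC x0) n)%C.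
Proof.
  intros Hx Hc Hs Hs' n. induction n.
  - specialize (Hs O). rewrite Hs' in Hs. simpl in Hs. simpl Fd.
    replace (p O) with (RtoC (1 * G O / c)) by (rewrite Hs; ring).
    apply ceq; simpl; field; auto.
  - rewrite Fd_S. change (fun j => G (S n - S j)%nat) with (fun j => G (n - j)%nat).
    specialize (Hs (S n)). simpl sh in Hs.
    replace (p (S n)) with (s (S n) + z * p n)%C by (rewrite Hs; ring).
    rewrite Hs', IHn. simpl Nat.sub.
    destruct (Fd (fun j => G (n - j)%nat) (z * RtoC x0) n) as [f1 f2]. destruct z as [z1 z2].
    apply ceq; simpl; field; auto.
Qed.

Lemma pser_eq (a : nat -> C) (x l l' : C) : is_pseries a x l -> l = l' -> is_pseries a x l'.
Proof. intros H E; subst; exact H. Qed.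

Open Scope C_scope.

Theorem theorem2 (a b c : R) (hac : (0 < a * c)%R) (hdisc : (0 < b * b - 4 * a * c)%R)
  (P : nat -> C -> C) (hP : generated_by P (genf a b c))
  (alpha : C)
  (halpha : RtoC a * alpha * alpha + RtoC b * alpha + RtoC c = 0)
  (hmin : forall beta : C, RtoC a * beta * beta + RtoC b * beta + RtoC c = 0 ->
            (Cmod alpha <= Cmod beta)%R) :
  forall (m : nat) (z : C), (Cmod z <= / Cmod alpha)%R -> P m z <> 0.
Proof.
  intros m z Hz.
  assert (Ha : a <> 0%R) by (intro; subst; lra).
  assert (Hc : c <> 0%R) by (intro; subst; lra).
  destruct alpha as [x0 y0].
  apply (f_equal Re) in halpha as Er. apply (f_equal Im) in halpha as Ei. simpl in Er, Ei.
  assert (Hy : y0 = 0%R).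
  { destruct (Req_dec y0 0) as [|Hy]; auto. exfalso.
    assert (Hl : (2 * a * x0 + b = 0)%R).
    { apply (Rmult_eq_reg_l y0); auto. nra. }
    assert (0 < y0 * y0)%R by (apply Rsqr_pos_lt; auto).
    assert (0 < a * a)%R by (apply Rsqr_pos_lt; auto).
    nra. }
  subst y0. change (x0, 0%R) with (RtoC x0) in *. rewrite Cmod_R in Hz.
  assert (E : (a * x0 * x0 + b * x0 + c = 0)%R) by nra.
  assert (Hx : x0 <> 0%R) by (intro; subst; lra).
  destruct (hP z) as [r [Hr Hser]].
  set (p := fun n => P n z).
  set (s := fun n => (p n - z * sh p n)%C).
  set (q := fun n => (RtoC c * s n + RtoC b * sh s n + RtoC a * sh (sh s) n)%C).
  set (dl := fun n : nat => match n with O => RtoC 1 | S _ => RtoC 0 end).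
  set (r1 := Rmin r (Rmin (Rabs c / (Rabs a + Rabs b + 1)) (Rmin 1 (/ (Cmod z + 1))))).
  assert (Hca : (0 < Rabs c)%R) by (apply Rabs_pos_lt; auto).
  assert (Hr1 : (0 < r1)%R).
  { pose proof (Rabs_pos a). pose proof (Rabs_pos b). pose proof (Cmod_ge_0 z).
    unfold r1. repeat apply Rmin_glb_lt; auto.
    apply Rdiv_lt_0_compat; lra. lra. apply Rinv_0_lt_compat. lra. }
  assert (Hq : forall n, q n = dl n).
  { apply (uniqC q dl (fun _ => RtoC 1) r1 Hr1). intros x Hxr. split.
    - assert (Hx1 : (Rabs x < r)%R) by (eapply Rlt_le_trans; [exact Hxr| apply Rmin_l]).
      assert (Hx2 : (Rabs x < Rabs c / (Rabs a + Rabs b + 1))%R).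
      { eapply Rlt_le_trans; [exact Hxr|]. unfold r1. eapply Rle_trans; [apply Rmin_r|apply Rmin_l]. }
      assert (Hx3 : (Rabs x < 1)%R).
      { eapply Rlt_le_trans; [exact Hxr|]. unfold r1. eapply Rle_trans; [apply Rmin_r|].
        eapply Rle_trans; [apply Rmin_r|apply Rmin_l]. }
      assert (Hx4 : (Rabs x < / (Cmod z + 1))%R).
      { eapply Rlt_le_trans; [exact Hxr|]. unfold r1. eapply Rle_trans; [apply Rmin_r|].
        eapply Rle_trans; [apply Rmin_r|apply Rmin_r]. }
      assert (HD1 : (a * x * x + b * x + c <> 0)%R).
      { intro HQ. pose proof (Rabs_pos a). pose proof (Rabs_pos b). pose proof (Rabs_pos x).
        assert (Rabs (a * x * x + b * x) <= (Rabs a + Rabs b) * Rabs x)%R.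
        { eapply Rle_trans. apply Rabs_triang. rewrite !Rabs_mult. assert (0 <= Rabs a * Rabs x * (1 - Rabs x))%R by (apply Rmult_le_pos; [apply Rmult_le_pos|]; lra). nra. }
        replace (a * x * x + b * x)%R with (- c)%R in H2 by lra. rewrite Rabs_Ropp in H2.
        apply Rmult_lt_compat_r with (r := (Rabs a + Rabs b + 1)%R) in Hx2; [|lra].
        unfold Rdiv in Hx2. rewrite Rmult_assoc, Rinv_l in Hx2 by lra. nra. }
      assert (HD2 : (1 - RtoC x * z) <> 0).
      { intro HZ. assert (HZ' : RtoC x * z = 1) by (rewrite <- (Cplus_0_l (RtoC x * z)), <- HZ; ring).
        apply (f_equal Cmod) in HZ'. rewrite Cmod_mult, Cmod_R, Cmod_1 in HZ'.
        pose proof (Cmod_ge_0 z). pose proof (Rabs_pos x).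
        apply Rmult_lt_compat_r with (r := (Cmod z + 1)%R) in Hx4; [|lra].
        rewrite Rinv_l in Hx4 by lra. nra. }
      assert (H0 : is_pseries p (RtoC x) (genf a b c x z)).
      { apply Hser. rewrite Cmod_R. exact Hx1. }
      set (L := genf a b c x z) in H0.
      pose proof (is_pseries_incr_1 _ _ _ H0) as H1.
      pose proof (is_pseries_scal z _ _ _ (Cmult_comm _ _) H1) as H2.
      pose proof (is_pseries_minus _ _ _ _ _ H0 H2) as H3.
      assert (Hs : is_pseries s (RtoC x) (L - z * (RtoC x * L))).
      { eapply is_pseries_ext; [|exact H3]. intros [|n]; reflexivity. }
      pose proof (is_pseries_incr_1 _ _ _ Hs) as H4.
      pose proof (is_pseries_incr_1 _ _ _ H4) as H5.
      pose proof (is_pseries_scal (RtoC c) _ _ _ (Cmult_comm _ _) Hs) as H6.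
      pose proof (is_pseries_scal (RtoC b) _ _ _ (Cmult_comm _ _) H4) as H7.
      pose proof (is_pseries_scal (RtoC a) _ _ _ (Cmult_comm _ _) H5) as H8.
      pose proof (is_pseries_plus _ _ _ _ _ H6 H7) as H9.
      pose proof (is_pseries_plus _ _ _ _ _ H9 H8) as H10.
      eapply pser_eq.
      { eapply is_pseries_ext; [|exact H10]. intros [|[|n]]; reflexivity. }
      change (c * (L - z * (x * L)) + b * (x * (L - z * (x * L))) + a * (x * (x * (L - z * (x * L)))) = 1).
      unfold L, genf.
      assert (HD1' : RtoC a * RtoC x * RtoC x + RtoC b * RtoC x + RtoC c <> 0).
      { intro HH. apply HD1. apply (f_equal Re) in HH. simpl in HH. lra. }
      field. split; auto.
    - unfold is_pseries, is_series.
      eapply filterlim_ext; [|apply filterlim_const].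
      intro n. induction n.
      + rewrite sum_O. simpl. change (RtoC 1 = RtoC 1 * RtoC 1). ring.
      + rewrite sum_Sn, <- IHn. simpl. change (RtoC 1 = RtoC 1 + (RtoC x * pow_n (RtoC x) n) * RtoC 0). ring. }
  assert (Q0 : (RtoC c * s O = 1)%C).
  { pose proof (Hq O) as H. unfold q, dl, sh in H. rewrite <- H. ring. }
  assert (Q1 : (RtoC c * s 1%nat + RtoC b * s O = 0)%C).
  { pose proof (Hq 1%nat) as H. unfold q, dl, sh in H. rewrite <- H. ring. }
  assert (Q2 : forall n, (RtoC c * s (S (S n)) + RtoC b * s (S n) + RtoC a * s n = 0)%C).
  { intro n. pose proof (Hq (S (S n))) as H. unfold q, dl, sh in H. exact H. }
  pose proof (rec_sol a b c x0 s Hc Hx E Q0 Q1 Q2) as Hs'.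
  assert (Hrho : (0 < a * x0 * x0 / c)%R).
  { replace (a * x0 * x0 / c)%R with ((a * c) * (x0 * x0) / (c * c))%R by (field; auto).
    apply Rdiv_lt_0_compat. apply Rmult_lt_0_compat; auto. apply Rsqr_pos_lt; auto.
    apply Rsqr_pos_lt; auto. }
  set (rho := (a * x0 * x0 / c)%R) in *.
  pose proof (p_sol x0 c z p s (Gs rho) Hx Hc (fun n => eq_refl) Hs' m) as Hp.
  change (p m <> 0). rewrite Hp. apply Cmult_neq_0.
  { intro HH. apply (f_equal Re) in HH. simpl in HH.
    apply (Rmult_integral_contrapositive_currified (/ c) ((/ x0) ^ m)); auto.
    apply Rinv_neq_0_compat; auto. apply pow_nonzero, Rinv_neq_0_compat; auto. }
  destruct m as [|k].
  { simpl. intro HH. apply (f_equal Re) in HH. simpl in HH. lra. }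
  apply NV.
  - rewrite Cmod_mult, Cmod_R.
    pose proof (Rabs_pos_lt x0 Hx).
    apply Rmult_le_compat_r with (r := Rabs x0) in Hz; [|lra].
    rewrite Rinv_l in Hz by lra. exact Hz.
  - intro j. pose proof (Gs_ge1 rho (S k - j) Hrho). lra.
  - intro j. apply Gs_mono; auto. lia.
  - replace (S k - 1)%nat with k by lia. replace (S k - 0)%nat with (S k) by lia.
    apply Gs_lt; auto.
Qed.
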